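(* If $S\subseteq\mathbb{N}^{\mathbb{N}}$ is defined by a sentence $\phi$ of $\mathscr{L}_{\max}$ without nested quantifiers (that is, no quantifier appears in the scope of another quantifier), then $S$ is guessable.
   Context: A function $G:\mathbb{N}^{<\mathbb{N}}\to\{0,1\}$ ($\mathbb{N}^{<\mathbb{N}}$ = finite sequences of naturals) is a guesser for $S\subseteq\mathbb{N}^{\mathbb{N}}$ if for every $f:\mathbb{N}\to\mathbb{N}$ there is $m>0$ such that for all $n>m$, $G(f(0),\ldots,f(n))$ equals $1$ if $f\in S$ and $0$ if $f\notin S$; $S$ is guessable if it has a guesser. The language $\mathscr{L}_{\max}$ is a first-order language extended with ellipses: constant symbols $\mathbf{n}$ (also $\bar n$) for each $n\in\mathbb{N}$; an $n$-ary function symbol $\tilde w$ for each $w:\mathbb{N}^n\to\mathbb{N}$ ($n>0$); an $n$-ary predicate symbol $\tilde p$ for each $p\subseteq\mathbb{N}^n$ ($n>0$); an $\mathbb{N}^{<\mathbb{N}}$-ary function symbol $\tilde G$ for each $G:\mathbb{N}^{<\mathbb{N}}\to\mathbb{N}$ (applicable to any finite number of arguments); a unary function symbol $\mathbf{f}$; and a symbol $\cdots_x$ for each variable $x$. Besides the usual terms, for $\mathbb{N}^{<\mathbb{N}}$-ary $G$, terms $u,v$ and variable $x$, $G(u(\mathbf{0}),\cdots_x,u(v))$ is a term with free variables $(FV(u)\setminus\{x\})\cup FV(v)$. Formulas are built as usual. For $f:\mathbb{N}\to\mathbb{N}$, $\mathscr{M}_f$ is the structure on $\mathbb{N}$ interpreting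 every symbol as the object it names and $\mathbf{f}$ as $f$; terms are evaluated as usual, plus $G(u(\mathbf{0}),\cdots_x,u(v))^{s}=G\big(u(x|\mathbf{0})^{s},\ldots,u(x|\overline{v^{s}})^{s}\big)$ under an assignment $s$, where $u(x|c)$ is substitution of the constant $c$ for $x$ in $u$. A sentence $\phi$ defines $S\subseteq\mathbb{N}^{\mathbb{N}}$ if for every $f:\mathbb{N}\to\mathbb{N}$, $\mathscr{M}_f\models\phi$ iff $f\in S$. *)

(* Defs.v *)
From Stdlib Require Import List Arith Bool.
Import ListNotations.

(** Variables are indexed by [nat].
    - [tconst n]        : the constant symbol  n-bar
    - [tfun w a args]   : the n-ary function symbol w~ (n = 1 + length args > 0),
                          w : N^n -> N given as a function on lists (only its
                          values on lists of length n matter)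
    - [tG G args]       : the N^{<N}-ary function symbol G~ applied to any
                          finite number of arguments
    - [tf t]            : the unary function symbol  f
    - [tell G u x v]    : the ellipsis term  G(u(0), ..._x, u(v)) *)
Inductive term : Type :=
| tvar (x : nat)
| tconst (n : nat)
| tfun (w : list nat -> nat) (a : term) (args : list term)
| tG (G : list nat -> nat) (args : list term)
| tf (t : term)
| tell (G : list nat -> nat) (u : term) (x : nat) (v : term).

(** Formulas.  [fpred p a args] is the n-ary predicate symbol p~
    (n = 1 + length args > 0), p ⊆ N^n given as a predicate on lists. *)
Inductive formula : Type :=
| fpred (p : list nat -> Prop) (a : term) (args : list term)
| feq (t1 t2 : term)
| fnot (phi : formula)
| fand (phi psi : formula)
| f_or (phi psi : formula)
| fimp (phi psi : formula)
| fall (x : nat) (phi : formula)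
| fex (x : nat) (phi : formula).

Definition upd (s : nat -> nat) (x c : nat) : nat -> nat :=
  fun y => if Nat.eqb y x then c else s y.

Fixpoint eval (f : nat -> nat) (s : nat -> nat) (t : term) : nat :=
  match t with
  | tvar x => s x
  | tconst n => n
  | tfun w a args => w (eval f s a :: map (eval f s) args)
  | tG G args => G (map (eval f s) args)
  | tf t1 => f (eval f s t1)
  | tell G u x v =>
      G (map (fun i => eval f (upd s x i) u) (seq 0 (S (eval f s v))))
  end.

Fixpoint sat (f : nat -> nat) (s : nat -> nat) (phi : formula) : Prop :=
  match phi with
  | fpred p a args => p (eval f s a :: map (eval f s) args)
  | feq t1 t2 => eval f s t1 = eval f s t2
  | fnot p => ~ sat f s p
  | fand p q => sat f s p /\ sat f s q
  | f_or p q => sat f s p \/ sat f s q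
  | fimp p q => sat f s p -> sat f s q
  | fall x p => forall c : nat, sat f (upd s x c) p
  | fex x p => exists c : nat, sat f (upd s x c) p
  end.

Fixpoint term_free (y : nat) (t : term) : bool :=
  match t with
  | tvar x => Nat.eqb x y
  | tconst _ => false
  | tfun _ a args => term_free y a || existsb (term_free y) args
  | tG _ args => existsb (term_free y) args
  | tf t1 => term_free y t1
  | tell _ u x v => (negb (Nat.eqb x y) && term_free y u) || term_free y v
  end.

Fixpoint form_free (y : nat) (phi : formula) : bool :=
  match phi with
  | fpred _ a args => term_free y a || existsb (term_free y) args
  | feq t1 t2 => term_free y t1 || term_free y t2
  | fnot p => form_free y p
  | fand p q | f_or p q | fimp p q => form_free y p || form_free y q
  | fall x p | fex x p => negb (Nat.eqb x y) && form_free y p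
  end.

Definition sentence (phi : formula) : Prop := forall y, form_free y phi = false.

Fixpoint qfree (phi : formula) : bool :=
  match phi with
  | fpred _ _ _ | feq _ _ => true
  | fnot p => qfree p
  | fand p q | f_or p q | fimp p q => qfree p && qfree q
  | fall _ _ | fex _ _ => false
  end.

Fixpoint no_nested_quantifiers (phi : formula) : bool :=
  match phi with
  | fpred _ _ _ | feq _ _ => true
  | fnot p => no_nested_quantifiers p
  | fand p q | f_or p q | fimp p q =>
      no_nested_quantifiers p && no_nested_quantifiers q
  | fall _ p | fex _ p => qfree p
  end.

(** M_f |= phi for a sentence phi (truth does not depend on the assignment). *)
Definition models (f : nat -> nat) (phi : formula) : Prop :=
  sat f (fun _ => 0) phi.

Definition defines (phi : formula) (S : (nat -> nat) -> Prop) : Prop :=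
  forall f : nat -> nat, models f phi <-> S f.

Definition prefix (f : nat -> nat) (n : nat) : list nat := map f (seq 0 (S n)).

Definition guesser (G : list nat -> bool) (S : (nat -> nat) -> Prop) : Prop :=
  forall f : nat -> nat, exists m : nat, 0 < m /\
    forall n : nat, m < n -> (G (prefix f n) = true <-> S f).

Definition guessable (S : (nat -> nat) -> Prop) : Prop :=
  exists G : list nat -> bool, guesser G S.

(* Main.v *)
Require Import Defs.
From Stdlib Require Import List Arith Bool Lia Classical ClassicalEpsilon.
Import ListNotations.

Definition agree (f g : nat -> nat) (N : nat) := forall k, k < N -> g k = f k.

Lemma agree_mono f g N M : M <= N -> agree f g N -> agree f g M.
Proof. unfold agree; intros; apply H0; lia. Qed.

Section TI.
Variable P : term -> Prop.
Hypotheses (Hv : forall x, P (tvar x)) (Hc : forall n, P (tconst n))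
  (Hfun : forall w a args, P a -> Forall P args -> P (tfun w a args))
  (HG : forall G args, Forall P args -> P (tG G args))
  (Hf : forall t, P t -> P (tf t))
  (Hell : forall G u x v, P u -> P v -> P (tell G u x v)).
Fixpoint term_ind' (t : term) : P t :=
  match t with
  | tvar x => Hv x
  | tconst n => Hc n
  | tfun w a args => Hfun w a args (term_ind' a)
      ((fix F (l : list term) : Forall P l :=
        match l with [] => Forall_nil _ | h :: r => Forall_cons _ (term_ind' h) (F r) end) args)
  | tG G args => HG G args
      ((fix F (l : list term) : Forall P l :=
        match l with [] => Forall_nil _ | h :: r => Forall_cons _ (term_ind' h) (F r) end) args)
  | tf t1 => Hf t1 (term_ind' t1)
  | tell G u x v => Hell G u x v (term_ind' u) (term_ind' v)
  end.
End TI.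

Definition tcont (t : term) := forall s f, exists N, forall g, agree f g N ->
  eval g s t = eval f s t.

Lemma list_cont (A : Type) (h : (nat -> nat) -> A -> nat) (l : list A) f :
  (forall a, In a l -> exists N, forall g, agree f g N -> h g a = h f a) ->
  exists N, forall g, agree f g N -> map (h g) l = map (h f) l.
Proof.
  induction l as [|a l IH]; intros H.
  - exists 0; intros; reflexivity.
  - destruct (H a (or_introl eq_refl)) as [N1 H1].
    destruct IH as [N2 H2]; [intros; apply H; now right|].
    exists (max N1 N2); intros g Hg; simpl.
    rewrite H1, H2 by (eapply agree_mono; [|exact Hg]; lia); reflexivity.
Qed.

Lemma term_cont : forall t, tcont t.
Proof.
  apply term_ind'; unfold tcont; intros; intros.
  - exists 0; intros; reflexivity.
  - exists 0; intros; reflexivity.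
  - destruct (H s f) as [N1 H1].
    destruct (list_cont _ (fun g t => eval g s t) args f) as [N2 H2].
    { intros b Hb. rewrite Forall_forall in H0. apply (H0 b Hb s f). }
    exists (max N1 N2); intros g Hg; simpl.
    rewrite H1, H2 by (eapply agree_mono; [|exact Hg]; lia); reflexivity.
  - destruct (list_cont _ (fun g t => eval g s t) args f) as [N2 H2].
    { intros a Ha. rewrite Forall_forall in H. apply (H a Ha s f). }
    exists N2; intros g Hg; simpl. rewrite H2; auto.
  - destruct (H s f) as [N1 H1].
    exists (max N1 (S (eval f s t))); intros g Hg; simpl.
    rewrite H1 by (eapply agree_mono; [|exact Hg]; lia).
    apply Hg; lia.
  - destruct (H0 s f) as [N1 H1].
    destruct (list_cont _ (fun g i => eval g (upd s x i) u) (seq 0 (S (eval f s v))) f)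
      as [N2 H2].
    { intros a _. apply H. }
    exists (max N1 N2); intros g Hg; simpl.
    rewrite H1 by (eapply agree_mono; [|exact Hg]; lia).
    f_equal. apply H2. eapply agree_mono; [|exact Hg]; lia.
Qed.

Lemma form_lc : forall phi, qfree phi = true -> forall s f, exists N, forall g,
  agree f g N -> (sat g s phi <-> sat f s phi).
Proof.
  induction phi; simpl; intros Hq s f; try discriminate.
  - destruct (term_cont a s f) as [N1 H1].
    destruct (list_cont _ (fun g t => eval g s t) args f) as [N2 H2].
    { intros b _. apply term_cont. }
    exists (max N1 N2); intros g Hg.
    rewrite H1, H2 by (eapply agree_mono; [|exact Hg]; lia); tauto.
  - destruct (term_cont t1 s f) as [N1 H1].
    destruct (term_cont t2 s f) as [N2 H2].
    exists (max N1 N2); intros g Hg.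
    rewrite H1, H2 by (eapply agree_mono; [|exact Hg]; lia); tauto.
  - destruct (IHphi Hq s f) as [N H]. exists N; intros g Hg. rewrite H; tauto.
  - apply andb_true_iff in Hq; destruct Hq as [Q1 Q2].
    destruct (IHphi1 Q1 s f) as [N1 H1]; destruct (IHphi2 Q2 s f) as [N2 H2].
    exists (max N1 N2); intros g Hg.
    rewrite H1, H2 by (eapply agree_mono; [|exact Hg]; lia); tauto.
  - apply andb_true_iff in Hq; destruct Hq as [Q1 Q2].
    destruct (IHphi1 Q1 s f) as [N1 H1]; destruct (IHphi2 Q2 s f) as [N2 H2].
    exists (max N1 N2); intros g Hg.
    rewrite H1, H2 by (eapply agree_mono; [|exact Hg]; lia); tauto.
  - apply andb_true_iff in Hq; destruct Hq as [Q1 Q2].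
    destruct (IHphi1 Q1 s f) as [N1 H1]; destruct (IHphi2 Q2 s f) as [N2 H2].
    exists (max N1 N2); intros g Hg.
    rewrite H1, H2 by (eapply agree_mono; [|exact Hg]; lia); tauto.
Qed.

Lemma prefix_length f n : length (prefix f n) = S n.
Proof. unfold prefix. now rewrite length_map, length_seq. Qed.

Lemma prefix_nth f n k : k < S n -> nth k (prefix f n) 0 = f k.
Proof.
  intros H. unfold prefix.
  rewrite nth_indep with (d' := f 0) by (rewrite length_map, length_seq; lia).
  rewrite map_nth, seq_nth by lia. reflexivity.
Qed.

Lemma open_guess (P : (nat -> nat) -> Prop) :
  (forall f, P f -> exists N, forall g, agree f g N -> P g) -> guessable P.
Proof.
  intros Ho.
  exists (fun l => if excluded_middle_informative
      (forall g, (forall k, k < length l -> g k = nth k l 0) -> P g) then true else false).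
  intros f. destruct (classic (P f)) as [Hf|Hf].
  - destruct (Ho f Hf) as [N HN]. exists (S N). split; [lia|]. intros n Hn.
    destruct excluded_middle_informative as [e|e]; [tauto|].
    exfalso; apply e. intros g Hg. apply HN. intros k Hk.
    rewrite Hg by (rewrite prefix_length; lia). apply prefix_nth; lia.
  - exists 1. split; [lia|]. intros n Hn.
    destruct excluded_middle_informative as [e|e]; [|split; [discriminate|tauto]].
    exfalso; apply Hf, e. intros k Hk. rewrite prefix_length in Hk.
    now rewrite prefix_nth.
Qed.

Lemma guess_ext (S T : (nat -> nat) -> Prop) :
  (forall f, S f <-> T f) -> guessable S -> guessable T.
Proof.
  intros H [G HG]. exists G. intros f. destruct (HG f) as [m [Hm Hn]].
  exists m; split; auto. intros n Hmn. rewrite <- H; auto.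
Qed.

Lemma guess_not (P : (nat -> nat) -> Prop) : guessable P -> guessable (fun f => ~ P f).
Proof.
  intros [G HG]. exists (fun l => negb (G l)). intros f.
  destruct (HG f) as [m [Hm Hn]]. exists m; split; auto. intros n Hmn.
  specialize (Hn n Hmn). destruct (G (prefix f n)); simpl.
  - split; [discriminate|]. intros H; exfalso; apply H, Hn; reflexivity.
  - split; [|reflexivity]. intros _ H. apply Hn in H; discriminate.
Qed.

Lemma guess_bin (op : bool -> bool -> bool) (C : Prop -> Prop -> Prop)
  (Hop : forall b1 b2 P1 P2, (b1 = true <-> P1) -> (b2 = true <-> P2) ->
     (op b1 b2 = true <-> C P1 P2)) S1 S2 :
  guessable S1 -> guessable S2 -> guessable (fun f => C (S1 f) (S2 f)).
Proof.
  intros [G1 H1] [G2 H2]. exists (fun l => op (G1 l) (G2 l)). intros f.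
  destruct (H1 f) as [m1 [_ K1]]; destruct (H2 f) as [m2 [_ K2]].
  exists (S (max m1 m2)); split; [lia|]. intros n Hn.
  apply Hop; [apply K1 | apply K2]; lia.
Qed.

Lemma main : forall phi, no_nested_quantifiers phi = true ->
  forall s, guessable (fun f => sat f s phi).
Proof.
  assert (Hqf : forall phi, qfree phi = true -> forall s, guessable (fun f => sat f s phi)).
  { intros phi Hq s. apply open_guess. intros f Hf.
    destruct (form_lc phi Hq s f) as [N HN]. exists N; intros g Hg. now apply HN. }
  induction phi; intros Hq s; cbn [no_nested_quantifiers] in Hq.
  - apply Hqf; reflexivity.
  - apply Hqf; reflexivity.
  - exact (guess_not _ (IHphi Hq s)).
  - apply andb_true_iff in Hq; destruct Hq.
    refine (guess_bin andb and _ (fun f => sat f s phi1) (fun f => sat f s phi2) _ _); [|auto|auto].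
    intros [] [] P1 P2 E1 E2; simpl; split; intuition; try discriminate;
      try (apply E1; auto); try (apply E2; auto).
  - apply andb_true_iff in Hq; destruct Hq.
    refine (guess_bin orb or _ (fun f => sat f s phi1) (fun f => sat f s phi2) _ _); [|auto|auto].
    intros [] [] P1 P2 E1 E2; simpl; split; intuition; try discriminate;
      try (apply E1; auto); try (apply E2; auto);
      try (left; apply E1; auto); try (right; apply E2; auto);
      try (destruct H3 as [H3|H3]; [apply E1 in H3|apply E2 in H3]; discriminate).
  - apply andb_true_iff in Hq; destruct Hq.
    eapply guess_ext; [|refine (guess_bin orb or _ (fun f => ~ sat f s phi1) (fun f => sat f s phi2) _ _)].
    3: apply guess_not, (IHphi1 H s). 3: apply (IHphi2 H0 s).
    + intros f; simpl. destruct (classic (sat f s phi1)); tauto.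
    + intros [] [] P1 P2 E1 E2; simpl; split; intuition; try discriminate;
      try (apply E1; auto); try (apply E2; auto);
      try (left; apply E1; auto); try (right; apply E2; auto);
      try (destruct H3 as [H3|H3]; [apply E1 in H3|apply E2 in H3]; discriminate).
  - eapply guess_ext; [|apply guess_not, open_guess
       with (P := fun f => exists c, ~ sat f (upd s x c) phi)].
    + intros f; simpl. split.
      * intros H c. apply NNPP; intros H'. apply H; eauto.
      * intros H [c Hc]; apply Hc, H.
    + intros f [c Hc]. destruct (form_lc phi Hq (upd s x c) f) as [N HN].
      exists N; intros g Hg. exists c. rewrite HN; auto.
  - apply open_guess. intros f [c Hc]. destruct (form_lc phi Hq (upd s x c) f) as [N HN].
      exists N; intros g Hg. exists c. rewrite HN; auto.
Qed.

Theorem lemma4p10 (S : (nat -> nat) -> Prop) (phi : formula) :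
  sentence phi -> no_nested_quantifiers phi = true -> defines phi S ->
  guessable S.
Proof.
  intros _ Hn Hd. eapply guess_ext; [|apply (main phi Hn (fun _ => 0))].
  intros f. apply Hd.
Qed.
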